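(* For every integer $n\ge1$ and every $\eta>0$, $$\sup_{0\ne f\in\mathcal{T}_n(\eta)}\frac{|f'(0)|}{\|f\|_{L_2[0,1]}} \ge (1+\varepsilon_n)\,3^{-1/2}\,n^3,$$ where $1+\varepsilon_n := 3^{1/2}n^{-3}\left(\sum_{k=0}^{n-1}k^2(k+1)^2(2k+1)\right)^{1/2}$ (so $\varepsilon_n\to0$ as $n\to\infty$).
   Context: For $\eta>0$, $\mathcal{T}_n(\eta)$ denotes the set of all functions $f(t)=\sum_{j=1}^na_je^{i\lambda_jt}$ with $a_j\in\mathbb{C}$ and real $0<\lambda_1<\lambda_2<\cdots<\lambda_n<\eta$. $\|f\|_{L_2[0,1]}=(\int_0^1|f|^2)^{1/2}$. *)

(* Defs.v *)
From Stdlib Require Import Reals.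
Open Scope R_scope.

Fixpoint rsum (n : nat) (g : nat -> R) : R :=
  match n with
  | O => 0
  | S k => rsum k g + g k
  end.

(* Frequencies lam 0 < ... < lam (n-1), with 0 < lam 0 and lam (n-1) < eta
   (paper's lambda_1 .. lambda_n, re-indexed from 0). *)
Definition freqs_ok (n : nat) (eta : R) (lam : nat -> R) : Prop :=
  (forall j, (j < n)%nat -> 0 < lam j /\ lam j < eta) /\
  (forall j, (S j < n)%nat -> lam j < lam (S j)).

(* f(t) = sum_j (a j + i b j) e^{i lam_j t}:
   real part and imaginary part. *)
Definition fRe (n : nat) (a b lam : nat -> R) (t : R) : R :=
  rsum n (fun j => a j * cos (lam j * t) - b j * sin (lam j * t)).
Definition fIm (n : nat) (a b lam : nat -> R) (t : R) : R :=
  rsum n (fun j => a j * sin (lam j * t) + b j * cos (lam j * t)).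

Definition fAbs2 (n : nat) (a b lam : nat -> R) (t : R) : R :=
  fRe n a b lam t ^ 2 + fIm n a b lam t ^ 2.

Definition eps_n (n : nat) : R :=
  sqrt 3 * / (INR n ^ 3) *
  sqrt (rsum n (fun k => INR k ^ 2 * (INR k + 1) ^ 2 * (2 * INR k + 1))) - 1.

(* Main.v *)
Require Import Defs.
From Stdlib Require Import Reals Lra Lia.
Open Scope R_scope.

Lemma rsum_ext : forall k g h, (forall j, (j < k)%nat -> g j = h j) -> rsum k g = rsum k h.
Proof. induction k; intros g h H; simpl; auto. rewrite (IHk g h) by (intros; apply H; lia). rewrite H by lia; auto. Qed.

Lemma rsum_plus : forall k g h, rsum k (fun j => g j + h j) = rsum k g + rsum k h.
Proof. induction k; intros; simpl; [lra|rewrite IHk; lra]. Qed.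

Lemma rsum_scal : forall k c g, rsum k (fun j => c * g j) = c * rsum k g.
Proof. induction k; intros; simpl; [lra|rewrite IHk; lra]. Qed.

Lemma rsum_peel : forall k g, rsum (S k) g = g O + rsum k (fun j => g (S j)).
Proof. induction k; intros; simpl in *. lra. rewrite IHk. lra. Qed.

Lemma rsum_zero : forall k g, (forall j, (j < k)%nat -> g j = 0) -> rsum k g = 0.
Proof. intros. rewrite (rsum_ext k g (fun _ => 0)) by auto. clear. induction k; simpl; lra. Qed.

Lemma rsum_single : forall k g, (1 < k)%nat -> (forall j, (j < k)%nat -> j <> 1%nat -> g j = 0) -> rsum k g = g 1%nat.
Proof.
  intros k g Hk H. destruct k as [|k]; [lia|]. rewrite rsum_peel. destruct k as [|k]; [lia|].
  rewrite rsum_peel. rewrite (H 0%nat) by lia. rewrite rsum_zero. lra.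
  intros j Hj. apply H; lia.
Qed.

Fixpoint prodR (k : nat) (g : nat -> R) : R :=
  match k with O => 1 | S k' => prodR k' g * g k' end.

Lemma prodR_ext : forall k g h, (forall j, (j < k)%nat -> g j = h j) -> prodR k g = prodR k h.
Proof. induction k; intros g h H; simpl; auto. rewrite (IHk g h) by (intros; apply H; lia). rewrite H by lia; auto. Qed.

Lemma prodR_peel : forall k g, prodR (S k) g = g O * prodR k (fun j => g (S j)).
Proof. induction k; intros; simpl in *. lra. rewrite IHk. lra. Qed.

Lemma prodR_add : forall a b g, prodR (a + b) g = prodR a g * prodR b (fun j => g (a + j)%nat).
Proof. intros a b; induction b; intros; simpl. rewrite Nat.add_0_r; lra.
  rewrite Nat.add_succ_r. simpl. rewrite IHb. lra. Qed.

Definition dlt (Q : nat -> R) : nat -> R := fun i => Q (S i) - Q i.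
Fixpoint Pd (k : nat) (Q : nat -> R) : Prop :=
  match k with O => forall i, Q i = 0 | S k' => Pd k' (dlt Q) end.

Lemma Pd_ext : forall k Q Q', (forall i, Q i = Q' i) -> Pd k Q -> Pd k Q'.
Proof. induction k; simpl; intros Q Q' E H.
  intros i; rewrite <- E; auto.
  apply (IHk (dlt Q)); auto. intros i; unfold dlt; rewrite !E; auto. Qed.

Lemma Pd_plus : forall k P Q, Pd k P -> Pd k Q -> Pd k (fun i => P i + Q i).
Proof. induction k; simpl; intros P Q HP HQ.
  intros i; rewrite HP, HQ; lra.
  apply (Pd_ext _ (fun i => dlt P i + dlt Q i)). intros; unfold dlt; lra. auto. Qed.

Lemma Pd_shift : forall k Q, Pd k Q -> Pd k (fun i => Q (S i)).
Proof. induction k; simpl; intros Q H; auto. exact (IHk (dlt Q) H). Qed.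

Lemma Pd_lin : forall k Q a, Pd k Q -> Pd (S k) (fun i => (INR i + a) * Q i).
Proof. induction k; intros Q a H.
  - simpl in *. intros i. unfold dlt. rewrite !H. lra.
  - change (Pd (S k) (dlt (fun i => (INR i + a) * Q i))).
    apply (Pd_ext _ (fun i => (INR i + a) * dlt Q i + Q (S i))).
    intros i; unfold dlt; rewrite S_INR; lra.
    apply Pd_plus. apply IHk. exact H. apply Pd_shift. exact H.
Qed.

Lemma Pd_mono : forall k Q, Pd k Q -> Pd (S k) Q.
Proof. induction k; intros Q H. simpl in *. intros i; unfold dlt; rewrite !H; lra.
  simpl in *. apply IHk. auto. Qed.

Lemma Pd_prod : forall k j a Q, Pd j Q ->
  Pd (j + k) (fun i => prodR k (fun l => INR i + a l) * Q i).
Proof. induction k; intros j a Q H.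
  - rewrite Nat.add_0_r. apply (Pd_ext _ Q); auto. intros; simpl; lra.
  - rewrite Nat.add_succ_r. rewrite <- Nat.add_succ_l.
    apply (Pd_ext _ (fun i => prodR k (fun l => INR i + a l) * ((INR i + a k) * Q i))).
    intros; simpl; lra. apply IHk. apply Pd_lin. auto.
Qed.

Fixpoint binR (k i : nat) : R :=
  match k, i with
  | O, O => 1 | O, S _ => 0 | S _, O => 1
  | S k', S i' => binR k' i' + binR k' (S i') end.

Lemma binR_big : forall k i, (k < i)%nat -> binR k i = 0.
Proof. induction k; intros i H; destruct i; simpl; try lia; auto.
  rewrite !IHk by lia; lra. Qed.

Definition Alt (k : nat) (Q : nat -> R) := rsum (S k) (fun i => (-1)^i * binR k i * Q i).

Lemma Alt_step : forall k Q, Alt (S k) Q = - Alt k (dlt Q).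
Proof.
  intros k Q. unfold Alt.
  rewrite rsum_peel. simpl binR at 1.
  transitivity (Q O + rsum (S k) (fun i => (-1) ^ S i * binR k (S i) * Q (S i))
      - rsum (S k) (fun i => (-1) ^ i * binR k i * Q (S i))).
  { rewrite (rsum_ext (S k) (fun i => (-1) ^ S i * binR (S k) (S i) * Q (S i))
       (fun i => (-1) ^ S i * binR k (S i) * Q (S i) + (-1) * ((-1) ^ i * binR k i * Q (S i)))).
    rewrite rsum_plus, rsum_scal. simpl pow. lra.
    intros; simpl; ring. }
  transitivity (rsum (S (S k)) (fun i => (-1) ^ i * binR k i * Q i)
      - rsum (S k) (fun i => (-1) ^ i * binR k i * Q (S i))).
  { rewrite (rsum_peel (S k)). simpl pow. simpl binR. destruct k; simpl; lra. }
  replace (rsum (S (S k)) (fun i => (-1) ^ i * binR k i * Q i)) with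
    (rsum (S k) (fun i => (-1) ^ i * binR k i * Q i)).
  2:{ simpl rsum at 2. rewrite (binR_big k (S k)) by lia. simpl. lra. }
  rewrite (rsum_ext (S k) (fun i => (-1) ^ i * binR k i * dlt Q i)
     (fun i => (-1) * ((-1) ^ i * binR k i * Q i) + ((-1) ^ i * binR k i * Q (S i)))).
  rewrite rsum_plus, rsum_scal. lra.
  intros; unfold dlt; ring.
Qed.

Lemma Alt_zero : forall k Q, Pd k Q -> Alt k Q = 0.
Proof. induction k; intros Q H.
  unfold Alt; simpl in *. rewrite H. lra.
  rewrite Alt_step. rewrite IHk. lra. exact H. Qed.

Require Import Defs.
From Stdlib Require Import Reals Lra Lia.
Open Scope R_scope.

Lemma binR_0 : forall k, binR k 0 = 1.
Proof. destruct k; auto. Qed.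

Definition beta (n j : nat) : R :=
  (-1)^(S (S j)) * binR (S n) (S (S j)) * (INR j + 1)^2 * prodR (n-1) (fun l => INR j + 2 + INR l).
Definition Qm (n m i : nat) : R :=
  (INR i + (-1)) * (prodR m (fun l => INR i + (INR l - 1)) *
     (prodR (n-1-m) (fun l => INR i + (INR m + INR l)) * 1)).
Definition G (n m : nat) : R := rsum n (fun j => beta n j / (INR j + INR m + 1)).

Lemma Qm_Pd : forall n m, (m < n)%nat -> Pd (S n) (Qm n m).
Proof.
  intros n m H. unfold Qm.
  apply Pd_lin.
  replace n with (1 + (n-1-m) + m)%nat at 1 by lia.
  apply (Pd_prod m _ (fun l => INR l - 1)).
  apply (Pd_prod (n-1-m) 1 (fun l => INR m + INR l)).
  simpl. intros i. unfold dlt. lra.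
Qed.

Lemma Qm_id : forall n m i, (m < n)%nat ->
  Qm n m i * (INR i + INR m - 1) = (INR i - 1)^2 * prodR (n-1) (fun l => INR i + INR l).
Proof.
  intros n m i H. unfold Qm.
  assert (E : (INR i - 1) * prodR (n-1) (fun l => INR i + INR l) =
              prodR n (fun l => INR i + (INR l - 1))).
  { replace n with (S (n-1)) at 2 by lia. rewrite prodR_peel. change (INR 0) with 0.
    f_equal. lra. apply prodR_ext. intros; rewrite S_INR; lra. }
  replace ((INR i - 1)^2 * prodR (n-1) (fun l => INR i + INR l)) with
   ((INR i - 1) * ((INR i - 1) * prodR (n-1) (fun l => INR i + INR l))) by ring.
  rewrite E.
  replace (prodR n (fun l : nat => INR i + (INR l - 1))) with
     (prodR (m + S (n-1-m)) (fun l : nat => INR i + (INR l - 1))) by (f_equal; lia).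
  rewrite prodR_add, prodR_peel.
  rewrite Nat.add_0_r.
  rewrite (prodR_ext (n-1-m) (fun j => INR i + (INR (m + S j) - 1))
     (fun l => INR i + (INR m + INR l))).
  ring.
  intros; rewrite plus_INR, S_INR; ring.
Qed.

Lemma G_eq : forall n m, (m < n)%nat -> G n m = - Qm n m 0.
Proof.
  intros n m H.
  pose proof (Alt_zero _ _ (Qm_Pd n m H)) as Z. unfold Alt in Z.
  rewrite !rsum_peel in Z.
  assert (Q1 : Qm n m 1 = 0) by (unfold Qm; simpl INR; ring).
  rewrite Q1, binR_0 in Z.
  replace (rsum n (fun j : nat => (-1) ^ S (S j) * binR (S n) (S (S j)) * Qm n m (S (S j))))
    with (G n m) in Z. simpl pow in Z. lra.
  unfold G. apply rsum_ext. intros j Hj.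
  unfold beta.
  assert (Ej : INR (S (S j)) = INR j + 2) by (rewrite !S_INR; ring).
  pose proof (Qm_id n m (S (S j)) H) as I. rewrite Ej in I.
  replace (INR j + 2 + INR m - 1) with (INR j + INR m + 1) in I by ring.
  assert (Hp : INR j + INR m + 1 > 0) by (pose proof (pos_INR j); pose proof (pos_INR m); lra).
  replace (INR j + 2 - 1) with (INR j + 1) in I by ring.
  rewrite Rmult_assoc, <- I. field. lra.
Qed.

Lemma G_zero : forall n m, (2 <= n)%nat -> (m < n)%nat -> m <> 1%nat -> G n m = 0.
Proof.
  intros n m Hn H H1. rewrite G_eq by auto. unfold Qm.
  destruct m as [|m].
  - replace (n-1-0)%nat with (S (n-2)) by lia. rewrite prodR_peel. simpl INR. ring.
  - destruct m as [|m]; [lia|].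
    replace (S (S m)) with (2 + m)%nat at 1 by lia. rewrite prodR_add. simpl. ring.
Qed.

Lemma G_one : forall n, (2 <= n)%nat -> G n 1 = - prodR (n-2) (fun l => 1 + INR l).
Proof.
  intros n Hn. rewrite G_eq by lia. unfold Qm.
  replace (n-1-1)%nat with (n-2)%nat by lia. simpl prodR at 1. simpl INR.
  rewrite (prodR_ext (n-2) (fun l => 0 + (1 + INR l)) (fun l => 1 + INR l)) by (intros; ring).
  ring.
Qed.

Lemma binR_1 : forall k, binR k 1 = INR k.
Proof. induction k. reflexivity. simpl binR. rewrite IHk, binR_0, S_INR. ring. Qed.
Lemma binR_2 : forall k, binR k 2 = INR k * (INR k - 1) / 2.
Proof. induction k. simpl; field. simpl binR. rewrite IHk, binR_1, S_INR. field. Qed.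
Lemma binR_3 : forall k, binR k 3 = INR k * (INR k - 1) * (INR k - 2) / 6.
Proof. induction k. simpl; field. simpl binR. rewrite IHk, binR_2, S_INR. field. Qed.

Definition Ssum (n : nat) := rsum n (fun k => INR k ^ 2 * (INR k + 1) ^ 2 * (2 * INR k + 1)).
Lemma Ssum_closed : forall n, Ssum n = (INR n ^ 2 - 1) ^ 2 * INR n ^ 2 / 3.
Proof. unfold Ssum; induction n. simpl; field. change (rsum (S n) ?g) with (rsum n g + g n). rewrite IHn, S_INR. field. Qed.

Lemma prod3 : forall k, 2 * prodR (S k) (fun l => 3 + INR l) =
   (INR k + 1) * (INR k + 2) * (INR k + 3) * prodR k (fun l => 1 + INR l).
Proof. induction k. simpl; ring.
  change (prodR (S (S k)) ?g) with (prodR (S k) g * g (S k)).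
  change (prodR (S k) (fun l => 1 + INR l)) with (prodR k (fun l => 1 + INR l) * (1 + INR k)).
  rewrite <- Rmult_assoc, IHk, S_INR. ring. Qed.

Lemma beta1 : forall n, (2 <= n)%nat -> beta n 1 = Ssum n * G n 1.
Proof.
  intros n Hn. rewrite G_one by auto. rewrite Ssum_closed. unfold beta.
  destruct n as [|[|k]]; try lia.
  replace (S (S k) - 1)%nat with (S k) by lia. replace (S (S k) - 2)%nat with k by lia.
  assert (P := prod3 k).
  rewrite binR_3.
  rewrite (prodR_ext (S k) (fun l : nat => INR 1 + 2 + INR l) (fun l => 3 + INR l)) by (intros; simpl; ring).
  replace (prodR (S k) (fun l : nat => 3 + INR l)) with
    ((INR k + 1) * (INR k + 2) * (INR k + 3) * prodR k (fun l => 1 + INR l) / 2) by (rewrite <- P; field).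
  rewrite !S_INR. simpl INR. simpl pow. field.
Qed.

Require Import Defs.
From Stdlib Require Import Reals Lra Lia.
From Coquelicot Require Import Coquelicot.
Open Scope R_scope.

Lemma is_RInt_pow : forall k, is_RInt (fun x => x ^ k) 0 1 (/ (INR k + 1)).
Proof.
  intros k.
  assert (Hk : INR k + 1 <> 0) by (pose proof (pos_INR k); lra).
  assert (H := is_RInt_derive (fun x => x ^ S k / (INR k + 1)) (fun x => x^k) 0 1).
  replace (/ (INR k + 1)) with (minus (1 ^ S k / (INR k + 1)) (0 ^ S k / (INR k + 1))).
  apply H.
  - intros x _. auto_derive. auto. destruct k; simpl; field; auto.
  - intros x _. 
    apply (ex_derive_continuous (fun y => y ^ k)). auto_derive. auto.
  - unfold minus, plus, opp. simpl. rewrite pow1. field. auto.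
Qed.

Lemma is_RInt_scalR : forall f a b c I, is_RInt f a b I -> is_RInt (fun x => c * f x) a b (c * I).
Proof. intros. apply (is_RInt_scal f a b c I). auto. Qed.

Lemma is_RInt_plusR : forall f g a b I J, is_RInt f a b I -> is_RInt g a b J ->
  is_RInt (fun x => f x + g x) a b (I + J).
Proof. intros. apply (is_RInt_plus f g a b I J); auto. Qed.

Lemma is_RInt_rsum : forall K (g : nat -> R -> R) I a b,
  (forall j, (j < K)%nat -> is_RInt (g j) a b (I j)) ->
  is_RInt (fun x => rsum K (fun j => g j x)) a b (rsum K I).
Proof.
  induction K; intros g I a b H.
  - simpl. assert (H0 := is_RInt_const (V:=R_NormedModule) a b 0).
    replace (scal (b - a) (0:R_NormedModule)) with 0 in H0. exact H0.
    unfold scal; simpl; unfold mult; simpl; ring.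
  - simpl. apply is_RInt_plusR. apply IHK. intros; apply H; lia. apply H; lia.
Qed.

Definition pol (n : nat) (x : R) := rsum n (fun j => beta n j * x ^ j).

Lemma is_RInt_mom : forall n m, is_RInt (fun x => x ^ m * pol n x) 0 1 (G n m).
Proof.
  intros n m. unfold G, pol.
  apply is_RInt_ext with (fun x => rsum n (fun j => beta n j * x ^ (j + m))).
  { intros x _. rewrite <- rsum_scal. apply rsum_ext. intros. rewrite pow_add. ring. }
  apply is_RInt_rsum. intros j _.
  replace (beta n j / (INR j + INR m + 1)) with (beta n j * / (INR (j + m) + 1)).
  apply is_RInt_scalR. apply is_RInt_pow.
  rewrite plus_INR. unfold Rdiv. auto.
Qed.

Lemma is_RInt_pol2 : forall n, (2 <= n)%nat ->
  is_RInt (fun x => pol n x * pol n x) 0 1 (beta n 1 * G n 1).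
Proof.
  intros n Hn.
  apply is_RInt_ext with (fun x => rsum n (fun m => beta n m * (x ^ m * pol n x))).
  { intros x _. change (pol n x * pol n x) with (pol n x * rsum n (fun j => beta n j * x ^ j)).
    rewrite <- rsum_scal. apply rsum_ext. intros; ring. }
  replace (beta n 1 * G n 1) with (rsum n (fun m => beta n m * G n m)).
  apply is_RInt_rsum. intros j _. apply is_RInt_scalR. apply is_RInt_mom.
  apply rsum_single. lia. intros j Hj H1. rewrite G_zero by auto. ring.
Qed.

From Stdlib Require Import Reals Lra Lia.
From Coquelicot Require Import Coquelicot.
Open Scope R_scope.

Definition cis (x : R) : C := (cos x, sin x).
Fixpoint csum (L : nat) (g : nat -> C) : C :=
  match L with O => 0%C | S k => (csum k g + g k)%C end.
Definition kap (d : R) : C := (0, - / d).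
Definition shq (q : nat -> C) : nat -> C := fun j => match j with O => 0%C | S j' => q j' end.
Definition Mop (d : R) (q : nat -> C) : nat -> C := fun j => (kap d * (shq q j - q j))%C.
Definition addc (a : C) (q : nat -> C) : nat -> C :=
  fun j => match j with O => (q O + a)%C | S _ => q j end.
Fixpoint Hor (d : R) (dd : nat -> R) (r : nat) : nat -> C :=
  match r with O => fun _ => 0%C | S r' => addc (RtoC (dd r')) (Mop d (Hor d dd r')) end.
Definition supp (q : nat -> C) (L : nat) := forall j, (L <= j)%nat -> q j = 0%C.
Definition ev (d : R) (L : nat) (q : nat -> C) (t : R) : C :=
  csum L (fun j => q j * cis (d * INR j * t))%C.
Definition Ec (d t : R) : C := (kap d * (cis (d * t) - 1))%C.
Definition hv d dd r t := ev d r (Hor d dd r) t.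
Definition Vf (L : nat) (q : nat -> C) := csum L q.
Definition Df (L : nat) (q : nat -> C) := csum L (fun j => q j * RtoC (INR j))%C.

Lemma csum_ext : forall k g h, (forall j, (j < k)%nat -> g j = h j) -> csum k g = csum k h.
Proof. induction k; intros g h H; simpl; auto. rewrite (IHk g h) by (intros; apply H; lia). rewrite H by lia; auto. Qed.
Lemma csum_plus : forall k g h, csum k (fun j => g j + h j)%C = (csum k g + csum k h)%C.
Proof. induction k; intros; simpl. ring. rewrite IHk. ring. Qed.
Lemma csum_scal : forall k c g, csum k (fun j => c * g j)%C = (c * csum k g)%C.
Proof. induction k; intros; simpl. ring. rewrite IHk. ring. Qed.
Lemma csum_peel : forall k g, csum (S k) g = (g O + csum k (fun j => g (S j)))%C.
Proof. induction k; intros; simpl in *. ring. rewrite IHk. ring. Qed.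

Lemma cis_add : forall a b, cis (a + b) = (cis a * cis b)%C.
Proof. intros; unfold cis, Cmult; simpl. rewrite cos_plus, sin_plus. f_equal; ring. Qed.
Lemma cis_0 : cis 0 = 1%C.
Proof. unfold cis. rewrite cos_0, sin_0. reflexivity. Qed.

Lemma supp_Hor : forall d dd r, supp (Hor d dd r) r.
Proof. intros d dd r; induction r; intros j Hj; simpl; auto.
  destruct j as [|j]; [lia|]. unfold addc, Mop, shq. rewrite !IHr by lia. ring. Qed.

Lemma ev_supp : forall d L (q : nat -> C) t, q L = 0%C -> ev d (S L) q t = ev d L q t.
Proof. intros. unfold ev; simpl. rewrite H. ring. Qed.

Lemma ev_shq : forall d L q t, ev d (S L) (shq q) t = (cis (d * t) * ev d L q t)%C.
Proof. intros. unfold ev. rewrite csum_peel. simpl shq. rewrite <- csum_scal.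
  rewrite (csum_ext L _ (fun j => cis (d * t) * (q j * cis (d * INR j * t)))%C). ring.
  intros j _. rewrite S_INR. replace (d * (INR j + 1) * t) with (d * t + d * INR j * t) by ring.
  rewrite cis_add. ring. Qed.

Lemma ev_addc : forall d L q t a, ev d (S L) (addc a q) t = (ev d (S L) q t + a)%C.
Proof. intros. unfold ev. rewrite !csum_peel. simpl addc. simpl INR.
  replace (d * 0 * t) with 0 by ring. rewrite cis_0. ring. Qed.

Lemma ev_Mop : forall d L q t, supp q L ->
  ev d (S L) (Mop d q) t = (Ec d t * ev d L q t)%C.
Proof. intros d L q t H. unfold Ec.
  transitivity (kap d * (ev d (S L) (shq q) t + (-1) * ev d (S L) q t))%C.
  { unfold ev, Mop. rewrite <- (csum_scal (S L) (-1)%C), <- csum_plus, <- csum_scal.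
    apply csum_ext. intros; ring. }
  rewrite ev_shq, ev_supp by (apply H; lia). ring. Qed.

Lemma hv_S : forall d dd r t, hv d dd (S r) t = (RtoC (dd r) + Ec d t * hv d dd r t)%C.
Proof. intros. unfold hv. simpl Hor. rewrite ev_addc, ev_Mop by apply supp_Hor. ring. Qed.

Lemma hv_0 : forall d dd t, hv d dd 0 t = 0%C.
Proof. reflexivity. Qed.

Lemma Vf_Mop : forall d L q, supp q L -> Vf (S L) (Mop d q) = 0%C.
Proof. intros d L q H. unfold Vf, Mop.
  rewrite (csum_ext _ _ (fun j => kap d * (shq q j + (-1) * q j))%C) by (intros; ring).
  rewrite csum_scal, csum_plus, csum_scal, csum_peel. simpl csum. rewrite (H L) by lia.
  simpl shq. change (fun j => q j) with q. ring. Qed.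

Lemma Df_Mop : forall d L q, supp q L -> Df (S L) (Mop d q) = (kap d * Vf L q)%C.
Proof. intros d L q H. unfold Vf, Df, Mop.
  rewrite (csum_ext _ _ (fun j => kap d * (shq q j * RtoC (INR j) + (-1) * (q j * RtoC (INR j))))%C) by (intros; ring).
  rewrite csum_scal, csum_plus, csum_scal, csum_peel. simpl csum at 2. rewrite (H L) by lia.
  simpl shq.
  rewrite (csum_ext _ _ (fun j => q j * RtoC (INR j) + q j)%C).
  rewrite csum_plus. ring.
  intros j _. rewrite S_INR. unfold RtoC, Cmult, Cplus; simpl. f_equal; ring. Qed.

Lemma Vf_addc : forall L q a, Vf (S L) (addc a q) = (Vf (S L) q + a)%C.
Proof. intros. unfold Vf. rewrite !csum_peel. simpl addc. ring. Qed.
Lemma Df_addc : forall L q a, Df (S L) (addc a q) = Df (S L) q.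
Proof. intros. unfold Df. rewrite !csum_peel. simpl addc. simpl INR.
  unfold RtoC, Cmult, Cplus; simpl. f_equal; ring. Qed.

Lemma V_Hor : forall d dd r, Vf (S r) (Hor d dd (S r)) = RtoC (dd r).
Proof. intros. simpl Hor. rewrite Vf_addc, Vf_Mop by apply supp_Hor. ring. Qed.
Lemma D_Hor : forall d dd r, Df (S (S r)) (Hor d dd (S (S r))) = (kap d * RtoC (dd r))%C.
Proof. intros. change (Hor d dd (S (S r))) with (addc (RtoC (dd (S r))) (Mop d (Hor d dd (S r)))).
  rewrite Df_addc, Df_Mop by apply supp_Hor. rewrite V_Hor. ring. Qed.


Lemma sin_lo : forall x, 0 <= x <= 1 -> x - x^3/6 <= sin x.
Proof. intros x H. destruct (pre_sin_bound x 0) as [A B]; try lra.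
  unfold sin_approx, sin_term in A, B. simpl in A, B.
  match type of A with ?u <= _ => replace u with (x - x^3/6) in A by field end. exact A. Qed.
Lemma cos_lo : forall x, 0 <= x <= 1 -> 1 - x^2/2 <= cos x.
Proof. intros x H. destruct (pre_cos_bound x 0) as [A B]; try lra.
  unfold cos_approx, cos_term in A, B. simpl in A, B.
  match type of A with ?u <= _ => replace u with (1 - x^2/2) in A by field end. exact A. Qed.
Lemma sin_hi : forall x, 0 <= x -> sin x <= x.
Proof. intros x H. destruct (Req_dec x 0). subst; rewrite sin_0; lra.
  left; apply sin_lt_x; lra. Qed.

Lemma Cmod_le_of : forall z r, 0 <= r -> fst z ^2 + snd z ^2 <= r^2 -> Cmod z <= r.
Proof. unfold Cmod. intros. rewrite <- (sqrt_pow2 r) by auto. apply sqrt_le_1_alt. auto. Qed.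

Lemma div_sq_le : forall X Y d, 0 < d -> X <= Y * d^2 -> X / d^2 <= Y.
Proof. intros. assert (0 < d^2) by (apply pow_lt; auto).
  apply (Rmult_le_reg_r (d^2)); auto. unfold Rdiv. rewrite Rmult_assoc, Rinv_l by lra. lra. Qed.

Lemma Ec_bounds : forall d t, 0 < d <= 1 -> 0 <= t <= 1 ->
  Cmod (Ec d t) <= 1 /\ Cmod (Ec d t - RtoC t)%C <= d.
Proof.
  intros d t Hd Ht.
  set (th := d * t).
  assert (Hth : 0 <= th <= d) by (unfold th; split; nra).
  assert (S1 := sin_lo th ltac:(lra)). assert (S2 := sin_hi th ltac:(lra)).
  assert (C1 := cos_lo th ltac:(lra)). assert (C2 := COS_bound th).
  assert (SC := sin2_cos2 th). unfold Rsqr in SC.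
  assert (E1 : fst (Ec d t) = sin th / d).
  { unfold Ec, kap, cis, Cmult, Cminus, Cplus, Copp, RtoC; simpl. fold th. field. lra. }
  assert (E2 : snd (Ec d t) = (1 - cos th) / d).
  { unfold Ec, kap, cis, Cmult, Cminus, Cplus, Copp, RtoC; simpl. fold th. field. lra. }
  split.
  - apply Cmod_le_of. lra. rewrite E1, E2.
    replace ((sin th / d) ^ 2 + ((1 - cos th) / d) ^ 2) with
      ((sin th * sin th + (1 - cos th) ^ 2) / d ^ 2) by (field; lra).
    apply div_sq_le. lra.
    assert (th * th <= d * d) by nra. nra.
  - apply Cmod_le_of. lra.
    replace (fst (Ec d t - RtoC t)%C) with ((sin th - th) / d).
    2:{ unfold Cminus, Cplus, Copp, RtoC. cbn [fst snd]. rewrite E1. unfold th. field. lra. }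
    replace (snd (Ec d t - RtoC t)%C) with ((1 - cos th) / d).
    2:{ unfold Cminus, Cplus, Copp, RtoC. cbn [fst snd]. rewrite E2. ring. }
    replace (((sin th - th) / d) ^ 2 + ((1 - cos th) / d) ^ 2) with
      (((th - sin th) ^ 2 + (1 - cos th) ^ 2) / d ^ 2) by (field; lra).
    apply div_sq_le. lra.
    assert (A1 : (th - sin th) ^ 2 <= (th^3/6)^2).
    { apply pow_incr. lra. }
    assert (A2 : (1 - cos th) ^ 2 <= (th^2/2)^2).
    { apply pow_incr. lra. }
    assert (th^2 <= 1) by nra.
    assert (th^4 <= d^4) by (apply pow_incr; lra).
    assert ((th ^ 3 / 6) ^ 2 <= th^4/36).
    { replace ((th ^ 3 / 6) ^ 2) with (th^4 * th^2 / 36) by field.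
      assert (0 <= th^4) by (apply pow_le; lra). nra. }
    replace ((th ^ 2 / 2) ^ 2) with (th^4/4) in A2 by field.
    replace (d ^ 2 * d ^ 2) with (d^4) by ring.
    assert (0 <= th^4) by (apply pow_le; lra). lra.
Qed.

Fixpoint ph (dd : nat -> R) (r : nat) (t : R) : R :=
  match r with O => 0 | S r' => dd r' + t * ph dd r' t end.
Definition Bs (dd : nat -> R) (r : nat) := rsum r (fun i => Rabs (dd i)).

Lemma Bs_ge0 : forall dd r, 0 <= Bs dd r.
Proof. intros dd r; induction r; unfold Bs in *; simpl. lra. pose proof (Rabs_pos (dd r)); lra. Qed.

Lemma ph_bound : forall dd r t, 0 <= t <= 1 -> Rabs (ph dd r t) <= Bs dd r.
Proof. intros dd r t Ht; induction r; simpl. rewrite Rabs_R0. unfold Bs; simpl; lra.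
  unfold Bs in *. simpl rsum.
  eapply Rle_trans. apply Rabs_triang. rewrite Rabs_mult.
  assert (Rabs t <= 1) by (rewrite Rabs_pos_eq; lra).
  pose proof (Rabs_pos (ph dd r t)). pose proof (Rabs_pos t). nra. Qed.

Lemma hv_close : forall d dd r t, 0 < d <= 1 -> 0 <= t <= 1 ->
  Cmod (hv d dd r t - RtoC (ph dd r t))%C <= d * INR r * Bs dd r.
Proof.
  intros d dd r t Hd Ht. destruct (Ec_bounds d t Hd Ht) as [E1 E2].
  induction r.
  - simpl. rewrite hv_0. replace (0 - RtoC 0)%C with (RtoC 0).
    rewrite Cmod_R, Rabs_R0. lra. unfold RtoC, Cminus, Cplus, Copp; simpl. f_equal; ring.
  - rewrite hv_S. simpl ph.
    replace (RtoC (dd r) + Ec d t * hv d dd r t - RtoC (dd r + t * ph dd r t))%C with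
      (Ec d t * (hv d dd r t - RtoC (ph dd r t)) + (Ec d t - RtoC t) * RtoC (ph dd r t))%C.
    2:{ rewrite RtoC_plus, RtoC_mult. ring. }
    eapply Rle_trans. apply Cmod_triangle. rewrite !Cmod_mult, Cmod_R.
    pose proof (ph_bound dd r t Ht).
    pose proof (Cmod_ge_0 (hv d dd r t - RtoC (ph dd r t))%C).
    pose proof (Cmod_ge_0 (Ec d t)). pose proof (Cmod_ge_0 (Ec d t - RtoC t)%C).
    pose proof (Rabs_pos (ph dd r t)). pose proof (Bs_ge0 dd r).
    assert (Bs dd r <= Bs dd (S r)) by (unfold Bs; simpl; pose proof (Rabs_pos (dd r)); lra).
    rewrite S_INR. pose proof (pos_INR r).
    assert (Cmod (Ec d t) * Cmod (hv d dd r t - RtoC (ph dd r t)) <= d * INR r * Bs dd r) by nra.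
    assert (Cmod (Ec d t - RtoC t) * Rabs (ph dd r t) <= d * Bs dd r) by nra.
    assert (d * INR r * Bs dd r + d * Bs dd r <= d * (INR r + 1) * Bs dd (S r)).
    { assert (d * (INR r + 1) * Bs dd r <= d * (INR r + 1) * Bs dd (S r)).
      apply Rmult_le_compat_l. nra. auto. nra. }
    lra.
Qed.

Lemma ph_horner : forall dd r t, ph dd r t = rsum r (fun j => dd (r - 1 - j)%nat * t ^ j).
Proof. intros dd r t; induction r. reflexivity.
  rewrite rsum_peel. simpl ph. rewrite IHr. rewrite <- rsum_scal.
  replace (S r - 1 - 0)%nat with r by lia. simpl pow at 1.
  f_equal. ring. apply rsum_ext. intros j Hj.
  replace (S r - 1 - S j)%nat with (r - 1 - j)%nat by lia. simpl pow. ring. Qed.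

From Stdlib Require Import FunctionalExtensionality Classical.

Lemma fst_csum : forall k g, fst (csum k g) = rsum k (fun j => fst (g j)).
Proof. induction k; intros; simpl; auto. rewrite IHk. auto. Qed.
Lemma snd_csum : forall k g, snd (csum k g) = rsum k (fun j => snd (g j)).
Proof. induction k; intros; simpl; auto. rewrite IHk. auto. Qed.

Lemma fRe_csum : forall n a b lam t,
  fRe n a b lam t = fst (csum n (fun j => (a j, b j) * cis (lam j * t))%C).
Proof. intros. rewrite fst_csum. unfold fRe. apply rsum_ext. intros; simpl; ring. Qed.
Lemma fIm_csum : forall n a b lam t,
  fIm n a b lam t = snd (csum n (fun j => (a j, b j) * cis (lam j * t))%C).
Proof. intros. rewrite snd_csum. unfold fIm. apply rsum_ext. intros; simpl; ring. Qed.

Lemma is_derive_rsum : forall K (g : nat -> R -> R) dg x,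
  (forall j, is_derive (g j) x (dg j)) ->
  is_derive (fun t => rsum K (fun j => g j t)) x (rsum K dg).
Proof. induction K; intros g dg x H; simpl.
  - apply (is_derive_const (K:=R_AbsRing) (V:=R_NormedModule) 0).
  - apply (is_derive_plus (fun t => rsum K (fun j => g j t)) (g K)). apply IHK; auto. auto.
Qed.

Lemma fRe_der : forall n a b lam x, is_derive (fRe n a b lam) x
  (rsum n (fun j => - a j * lam j * sin (lam j * x) - b j * lam j * cos (lam j * x))).
Proof. intros. unfold fRe.
  apply (is_derive_rsum n (fun j t => a j * cos (lam j * t) - b j * sin (lam j * t))).
  intros j. auto_derive. auto. ring. Qed.
Lemma fIm_der : forall n a b lam x, is_derive (fIm n a b lam) x
  (rsum n (fun j => a j * lam j * cos (lam j * x) - b j * lam j * sin (lam j * x))).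
Proof. intros. unfold fIm.
  apply (is_derive_rsum n (fun j t => a j * sin (lam j * t) + b j * cos (lam j * t))).
  intros j. auto_derive. auto. ring. Qed.

Lemma fAbs2_cont : forall n a b lam x, continuity_pt (fAbs2 n a b lam) x.
Proof. intros. apply derivable_continuous_pt.
  eexists. apply is_derive_Reals. unfold fAbs2.
  apply (is_derive_plus (fun t => fRe n a b lam t ^ 2) (fun t => fIm n a b lam t ^ 2));
  apply is_derive_pow; [apply fRe_der | apply fIm_der].
Qed.


Definition ddn (n : nat) : nat -> R := fun r => beta n (n - 1 - r).
Definition Mc (n : nat) := INR n * Bs (ddn n) n.
Definition Kc (n : nat) := 2 * Bs (ddn n) n * Mc n + Mc n ^ 2.

Lemma prodR_pos : forall k g, (forall j, (j < k)%nat -> 0 < g j) -> 0 < prodR k g.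
Proof. induction k; intros g H; simpl. lra. apply Rmult_lt_0_compat. apply IHk; auto. apply H; lia. Qed.

Lemma G1_neg : forall n, (2 <= n)%nat -> G n 1 < 0.
Proof. intros. rewrite G_one by auto. 
  assert (0 < prodR (n - 2) (fun l => 1 + INR l)). apply prodR_pos. intros; pose proof (pos_INR j); lra.
  lra. Qed.

Lemma Ssum_pos : forall n, (2 <= n)%nat -> 0 < Ssum n.
Proof. intros. rewrite Ssum_closed. assert (2 <= INR n) by (replace 2 with (INR 2) by (simpl; lra); apply le_INR; auto).
  assert (0 < INR n ^ 2 - 1) by nra.
  assert (0 < (INR n ^ 2 - 1)^2) by (apply pow_lt; auto).
  assert (0 < INR n ^ 2) by (apply pow_lt; lra). 
  unfold Rdiv. apply Rmult_lt_0_compat. nra. lra. Qed.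

Lemma Cmod_cis : forall x, Cmod (cis x) = 1.
Proof. intros. unfold Cmod, cis; simpl. replace (cos x * (cos x * 1) + sin x * (sin x * 1)) with 1.
  apply sqrt_1. pose proof (sin2_cos2 x). unfold Rsqr in H. lra. Qed.

Lemma pol_ph : forall n t, ph (ddn n) n t = pol n t.
Proof. intros. rewrite ph_horner. unfold pol, ddn. apply rsum_ext. intros j Hj.
  replace (n - 1 - (n - 1 - j))%nat with j by lia. auto. Qed.

Lemma construct : forall n eta d, (2 <= n)%nat -> 0 < d <= 1 -> d * INR n < eta ->
  exists (lam a b : nat -> R),
    freqs_ok n eta lam /\
    (exists t : R, fRe n a b lam t <> 0 \/ fIm n a b lam t <> 0) /\
    exists (pr : Riemann_integrable (fAbs2 n a b lam) 0 1) (dRe dIm : R),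
      derivable_pt_lim (fRe n a b lam) 0 dRe /\
      derivable_pt_lim (fIm n a b lam) 0 dIm /\
      RiemannInt pr <= beta n 1 * G n 1 + d * Kc n /\ dRe = beta n 1.
Proof.
  intros n eta d Hn Hd Heta.
  set (gam := Hor d (ddn n) n).
  exists (fun j => d * (INR j + 1)), (fun j => fst (gam j)), (fun j => snd (gam j)).
  set (a := fun j => fst (gam j)). set (b := fun j => snd (gam j)).
  set (lam := fun j => d * (INR j + 1)).
  assert (Fv : forall t, fAbs2 n a b lam t = Cmod (hv d (ddn n) n t) ^ 2).
  { intros t. unfold fAbs2. rewrite fRe_csum, fIm_csum.
    rewrite (csum_ext n _ (fun j => shq gam (S j) * cis (d * INR (S j) * t))%C).
    2:{ intros j _. unfold a, b, lam. simpl shq. rewrite <- surjective_pairing. rewrite S_INR. auto. }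
    replace (csum n (fun j : nat => shq gam (S j) * cis (d * INR (S j) * t))%C)
      with (ev d (S n) (shq gam) t).
    2:{ unfold ev. rewrite csum_peel. simpl shq. ring. }
    rewrite ev_shq. change (ev d n gam t) with (hv d (ddn n) n t).
    replace (Cmod (hv d (ddn n) n t)) with (Cmod (cis (d * t) * hv d (ddn n) n t)%C)
      by (rewrite Cmod_mult, Cmod_cis; ring).
    unfold Cmod. rewrite pow2_sqrt. auto.
    pose proof (pow2_ge_0 (fst (cis (d * t) * hv d (ddn n) n t)%C)).
    pose proof (pow2_ge_0 (snd (cis (d * t) * hv d (ddn n) n t)%C)). lra. }
  assert (Fb : forall t, 0 <= t <= 1 -> fAbs2 n a b lam t <= pol n t * pol n t + d * Kc n).
  { intros t Ht. rewrite Fv.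
    pose proof (hv_close d (ddn n) n t Hd Ht) as HC. rewrite pol_ph in HC.
    pose proof (ph_bound (ddn n) n t Ht) as HB. rewrite pol_ph in HB.
    assert (T : Cmod (hv d (ddn n) n t) <= Rabs (pol n t) + d * Mc n).
    { replace (hv d (ddn n) n t) with (RtoC (pol n t) + (hv d (ddn n) n t - RtoC (pol n t)))%C by ring.
      eapply Rle_trans. apply Cmod_triangle. rewrite Cmod_R. unfold Mc. lra. }
    pose proof (Cmod_ge_0 (hv d (ddn n) n t)).
    pose proof (Rabs_pos (pol n t)).
    assert (0 <= Mc n) by (unfold Mc; pose proof (pos_INR n); pose proof (Bs_ge0 (ddn n) n); nra).
    assert (Cmod (hv d (ddn n) n t) ^ 2 <= (Rabs (pol n t) + d * Mc n) ^ 2) by (apply pow_incr; lra).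
    assert (Rabs (pol n t) ^ 2 = pol n t * pol n t) by (rewrite pow2_abs; ring).
    unfold Kc.
    assert (d * d * Mc n ^ 2 <= d * Mc n ^ 2).
    { assert (0 <= Mc n ^2) by (apply pow2_ge_0). nra. }
    assert (Rabs (pol n t) * d * Mc n <= Bs (ddn n) n * d * Mc n).
    { apply Rmult_le_compat_r. auto. apply Rmult_le_compat_r; lra. }
    nra. }
  set (dRe := rsum n (fun j => - a j * lam j * sin (lam j * 0) - b j * lam j * cos (lam j * 0))).
  set (dIm := rsum n (fun j => a j * lam j * cos (lam j * 0) - b j * lam j * sin (lam j * 0))).
  assert (DR : derivable_pt_lim (fRe n a b lam) 0 dRe) by (apply is_derive_Reals; apply fRe_der).
  assert (DI : derivable_pt_lim (fIm n a b lam) 0 dIm) by (apply is_derive_Reals; apply fIm_der).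
  assert (Dc : (dRe, dIm) = ((0, d) * (Df n gam + Vf n gam))%C).
  { transitivity (csum n (fun j => gam j * (0, lam j))%C).
    - apply injective_projections; cbn [fst snd]; [rewrite fst_csum | rewrite snd_csum];
      unfold dRe, dIm; apply rsum_ext; intros j _; rewrite Rmult_0_r, sin_0, cos_0;
      unfold a, b; destruct (gam j); simpl; ring.
    - unfold Df, Vf. rewrite <- csum_plus, <- csum_scal. apply csum_ext. intros j _.
      unfold lam. destruct (gam j). unfold Cmult, Cplus, RtoC; simpl. f_equal; ring. }
  assert (Dv : dRe = beta n 1).
  { destruct n as [|[|m]]; try lia.
    unfold gam in Dc. rewrite D_Hor, V_Hor in Dc.
    unfold ddn in Dc. replace (S (S m) - 1 - m)%nat with 1%nat in Dc by lia.
    replace (S (S m) - 1 - S m)%nat with 0%nat in Dc by lia.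
    apply (f_equal fst) in Dc. cbn [fst] in Dc. rewrite Dc.
    unfold kap, Cmult, Cplus, RtoC; simpl. field. lra. }
  assert (B1 : beta n 1 <> 0).
  { rewrite beta1 by auto. pose proof (Ssum_pos n Hn). pose proof (G1_neg n Hn). nra. }
  split; [|split].
  - split.
    + intros j Hj. unfold lam. pose proof (pos_INR j). split. nra.
      assert (INR j + 1 <= INR n) by (rewrite <- S_INR; apply le_INR; lia). nra.
    + intros j Hj. unfold lam. rewrite S_INR. lra.
  - apply NNPP. intros Hno.
    assert (Z : fRe n a b lam = fun _ => 0).
    { apply functional_extensionality. intros t. apply NNPP. intros H. apply Hno. exists t. left; auto. }
    rewrite Z in DR. assert (DR0 := derivable_pt_lim_const 0 0).
    pose proof (uniqueness_limite _ _ _ _ DR DR0). lra.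
  - assert (pr : Riemann_integrable (fAbs2 n a b lam) 0 1).
    { apply continuity_implies_RiemannInt. lra. intros; apply fAbs2_cont. }
    exists pr, dRe, dIm. split; [auto|split; [auto|split; [|auto]]].
    rewrite <- RInt_Reals.
    assert (HI : is_RInt (fun x => pol n x * pol n x + d * Kc n) 0 1 (beta n 1 * G n 1 + d * Kc n)).
    { apply is_RInt_plusR. apply is_RInt_pol2; auto.
      assert (H0 := is_RInt_const (V:=R_NormedModule) 0 1 (d * Kc n)).
      replace (scal (1 - 0) (d * Kc n : R_NormedModule)) with (d * Kc n) in H0. exact H0.
      unfold scal; simpl; unfold mult; simpl; ring. }
    rewrite <- (is_RInt_unique _ _ _ _ HI).
    apply RInt_le. lra. apply ex_RInt_Reals_1; auto. exists (beta n 1 * G n 1 + d * Kc n); exact HI.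
    intros x Hx. apply Fb. lra.
Qed.


Lemma bound_eq : forall n, (1 <= n)%nat ->
  (1 + eps_n n) * / sqrt 3 * INR n ^ 3 = sqrt (Ssum n).
Proof. intros n Hn. unfold eps_n, Ssum.
  assert (0 < sqrt 3) by (apply sqrt_lt_R0; lra).
  assert (0 < INR n) by (apply lt_0_INR; lia).
  assert (0 < INR n ^ 3) by (apply pow_lt; auto).
  field. split; lra. Qed.

Lemma sqrt_pos_of : forall x y, y <> 0 -> 0 < sqrt (y ^ 2 + x ^ 2).
Proof. intros. apply sqrt_lt_R0. assert (0 < y^2) by (apply pow2_gt_0; auto).
  pose proof (pow2_ge_0 x). lra. Qed.

Theorem theorem5p3 :
  forall (n : nat) (eta : R), (1 <= n)%nat -> 0 < eta ->
  forall c : R, c < (1 + eps_n n) * / sqrt 3 * INR n ^ 3 ->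
  exists (lam a b : nat -> R),
    freqs_ok n eta lam /\
    (exists t : R, fRe n a b lam t <> 0 \/ fIm n a b lam t <> 0) /\
    exists (pr : Riemann_integrable (fAbs2 n a b lam) 0 1) (dRe dIm : R),
      derivable_pt_lim (fRe n a b lam) 0 dRe /\
      derivable_pt_lim (fIm n a b lam) 0 dIm /\
      c * sqrt (RiemannInt pr) < sqrt (dRe ^ 2 + dIm ^ 2).
Proof.
  intros n eta Hn Heta c Hc.
  rewrite bound_eq in Hc by auto.
  destruct (Compare_dec.le_lt_dec 2 n) as [H2 | H1].
  - set (Sn := Ssum n). set (P := beta n 1 * G n 1).
    assert (HS : 0 < Sn) by (apply Ssum_pos; auto).
    assert (HG := G1_neg n H2).
    assert (Hb1 : beta n 1 = Sn * G n 1) by (apply beta1; auto).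
    assert (HP : 0 < P).
    { unfold P; rewrite Hb1. replace (Sn * G n 1 * G n 1) with (Sn * (G n 1 * G n 1)) by ring.
      apply Rmult_lt_0_compat; nra. }
    assert (HK : 0 <= Kc n).
    { unfold Kc, Mc. pose proof (pos_INR n). pose proof (Bs_ge0 (ddn n) n).
      assert (0 <= INR n * Bs (ddn n) n) by nra. pose proof (pow2_ge_0 (INR n * Bs (ddn n) n)). nra. }
    assert (Hn0 : 0 < INR n) by (apply lt_0_INR; lia).
    set (d0 := eta / (2 * INR n)).
    assert (Hd0 : 0 < d0) by (unfold d0; apply Rdiv_lt_0_compat; lra).
    assert (Hd0n : d0 * INR n < eta) by (unfold d0; field_simplify; lra).
    destruct (Rle_lt_dec c 0) as [Hc0 | Hc0].
    + set (d := Rmin 1 d0).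
      assert (Hd : 0 < d <= 1) by (unfold d; split; [apply Rmin_glb_lt; lra | apply Rmin_l]).
      assert (Hdn : d * INR n < eta).
      { assert (d <= d0) by apply Rmin_r. nra. }
      destruct (construct n eta d H2 Hd Hdn) as (lam & a & b & Hf & Hnz & pr & dRe & dIm & DR & DI & HI & Hre).
      exists lam, a, b. split; auto. split; auto. exists pr, dRe, dIm. split; auto. split; auto.
      assert (0 <= sqrt (RiemannInt pr)) by apply sqrt_pos.
      assert (dRe <> 0) by (rewrite Hre, Hb1; nra).
      pose proof (sqrt_pos_of dIm dRe H0). nra.
    + assert (Hc2 : c ^ 2 < Sn).
      { assert (c < sqrt Sn) by auto. assert (c ^ 2 < sqrt Sn ^ 2) by (pose proof (sqrt_pos Sn); nra).
        rewrite pow2_sqrt in H0 by lra. auto. }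
      set (d1 := (Sn - c ^ 2) * P / (2 * (c ^ 2 * Kc n + 1))).
      assert (Hd1 : 0 < d1).
      { unfold d1. apply Rdiv_lt_0_compat. nra. pose proof (pow2_ge_0 c). nra. }
      set (d := Rmin 1 (Rmin d0 d1)).
      assert (Hdd0 : d <= d0) by (unfold d; eapply Rle_trans; [apply Rmin_r | apply Rmin_l]).
      assert (Hdd1 : d <= d1) by (unfold d; eapply Rle_trans; [apply Rmin_r | apply Rmin_r]).
      assert (Hd : 0 < d <= 1).
      { unfold d; split; [apply Rmin_glb_lt; [lra | apply Rmin_glb_lt; lra] | apply Rmin_l]. }
      assert (Hdn : d * INR n < eta) by nra.
      destruct (construct n eta d H2 Hd Hdn) as (lam & a & b & Hf & Hnz & pr & dRe & dIm & DR & DI & HI & Hre).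
      exists lam, a, b. split; auto. split; auto. exists pr, dRe, dIm. split; auto. split; auto.
      fold P in HI.
      assert (Hkey : c ^ 2 * (P + d * Kc n) < Sn * P).
      { assert (c ^ 2 * Kc n * d <= c ^ 2 * Kc n * d1).
        { apply Rmult_le_compat_l. pose proof (pow2_ge_0 c). nra. auto. }
        assert (c ^ 2 * Kc n * d1 < (Sn - c ^ 2) * P).
        { unfold d1. assert (0 < c ^ 2 * Kc n + 1) by (pose proof (pow2_ge_0 c); nra).
          apply (Rmult_lt_reg_r (2 * (c ^ 2 * Kc n + 1))). lra.
          replace (c ^ 2 * Kc n * ((Sn - c ^ 2) * P / (2 * (c ^ 2 * Kc n + 1))) *
            (2 * (c ^ 2 * Kc n + 1))) with (c ^ 2 * Kc n * ((Sn - c ^ 2) * P)) by (field; lra).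
          assert (0 < (Sn - c^2) * P) by nra. nra. }
        nra. }
      assert (HPd : 0 <= P + d * Kc n) by nra.
      apply Rle_lt_trans with (c * sqrt (P + d * Kc n)).
      { apply Rmult_le_compat_l. lra. apply sqrt_le_1_alt. auto. }
      apply Rlt_le_trans with (sqrt (dRe ^ 2)).
      { rewrite <- (sqrt_pow2 c) at 1 by lra. rewrite <- sqrt_mult_alt by (apply pow2_ge_0).
        apply sqrt_lt_1_alt. split. apply Rmult_le_pos; [apply pow2_ge_0|auto].
        rewrite Hre, Hb1. replace ((Sn * G n 1) ^ 2) with (Sn * P) by (unfold P; rewrite Hb1; ring). auto. }
      apply sqrt_le_1_alt. pose proof (pow2_ge_0 dIm). lra.
  - assert (n = 1%nat) by lia. subst n.
    assert (Hc0 : c < 0).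
    { unfold Ssum in Hc. simpl in Hc. replace (0 + 0 * (0 * 1) * ((0 + 1) * ((0 + 1) * 1)) * (2 * 0 + 1)) with 0 in Hc by ring.
      rewrite sqrt_0 in Hc. auto. }
    exists (fun _ => eta / 2), (fun _ => 1), (fun _ => 0).
    split; [|split].
    + split. intros j Hj; lra. intros j Hj; lia.
    + exists 0. left. unfold fRe. simpl. rewrite Rmult_0_r, cos_0, sin_0. lra.
    + assert (pr : Riemann_integrable (fAbs2 1 (fun _ => 1) (fun _ => 0) (fun _ => eta / 2)) 0 1).
      { apply continuity_implies_RiemannInt. lra. intros; apply fAbs2_cont. }
      eexists pr, _, _. split; [apply is_derive_Reals; apply fRe_der|].
      split; [apply is_derive_Reals; apply fIm_der|].
      simpl. rewrite !Rmult_0_r, cos_0, sin_0.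
      assert (0 <= sqrt (RiemannInt pr)) by apply sqrt_pos.
      match goal with |- _ < sqrt ?u => replace u with ((eta/2)^2) by ring end.
      rewrite sqrt_pow2 by lra. nra.
Qed.
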